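(* In the setting of the context, for every $N$-tuple of integers $\mathbf{i}=(i_1,\dots,i_N)$ with $0\le i_k\le\ell_k$, define \[ V_{\mathbf{i}}=\sum_{\mathbf{n}=\mathbf{0}}^{\mathbf{i}}\mathscr{D}_{\mathbf{n},\mathbf{i}}V^{\mathbf{n}},\qquad \mathscr{D}_{\mathbf{n},\mathbf{i}}=\frac{(-1)^{|\mathbf{n}|-|\mathbf{i}|}}{(|\mathbf{i}|+|\mathbf{n}|+\omega^\star)_{|\mathbf{i}|-|\mathbf{n}|}}\prod_{p=1}^N\binom{\ell_p-n_p}{\ell_p-i_p}\big(|\mathbf{i}|_1^{p-1}+|\mathbf{n}|_1^{p}+|\boldsymbol{\ell}|_{p+1}^N-a_p+\omega^\star\big)_{i_p-n_p}. \] Then $A^\star V_{\mathbf{i}}=\theta^\star_{|\mathbf{i}|}V_{\mathbf{i}}$.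
   Context: Notation: for $N$-tuples of integers, $|\mathbf{n}|_j^k=\sum_{p=j}^k n_p$ (equal to $0$ if $j>k$), $|\mathbf{n}|=|\mathbf{n}|_1^N$, $\mathbf{e}_p$ the $p$-th unit $N$-tuple, $\mathbf{0}=(0,\dots,0)$; $(x)_k=x(x+1)\cdots(x+k-1)$, $(x)_0=1$. A sum $\sum_{\mathbf{n}=\mathbf{a}}^{\mathbf{b}}$ means the sum over all $\mathbf{n}$ with $a_p\le n_p\le b_p$ for every $p$. Setting: $N\ge1$, $\boldsymbol{\ell}=(\ell_1,\dots,\ell_N)$ nonnegative integers, $\mathcal{V}=\mathbb{C}^{\ell_1+1}\otimes\cdots\otimes\mathbb{C}^{\ell_N+1}$ with basis $V^{\mathbf{n}}$, $0\le n_p\le\ell_p$; $V^{\mathbf{n}}=0$ if some $n_p<0$ or $n_p>\ell_p$. Scalars $\theta_0,\theta_0^\star,h,h^\star,\omega,\omega^\star,a_1,\dots,a_N\in\mathbb{C}$; $\theta_i=\theta_0+hi(i+\omega)$, $\theta^\star_i=\theta^\star_0+h^\star i(i+\omega^\star)$; $\xi_{\mathbf{n},p}=h(|\mathbf{n}|_1^{p-1}+|\mathbf{n}|_1^p+|\boldsymbol{\ell}|_p^N+a_p+\omega)n_p$, $\xi^\star_{\mathbf{n},p}=h^\star(|\mathbf{n}|_1^{p-1}+|\mathbf{n}|_1^p+|\boldsymbol{\ell}|_{p+1}^N-a_p+\omega^\star)(n_p-\ell_p)$. Operators: $A V^{\mathbf{n}}=\theta_{|\mathbf{n}|}V^{\mathbf{n}}+\sum_{p=1}^N\xi_{\mathbf{n}+\mathbf{e}_p,p}V^{\mathbf{n}+\mathbf{e}_p}$,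 $A^\star V^{\mathbf{n}}=\theta^\star_{|\mathbf{n}|}V^{\mathbf{n}}+\sum_{p=1}^N\xi^\star_{\mathbf{n}-\mathbf{e}_p,p}V^{\mathbf{n}-\mathbf{e}_p}$. Standing constraints: $h,h^\star\neq0$; $\omega,\omega^\star\notin\{-2|\boldsymbol{\ell}|+1,\dots,-1\}$; for each $i$, none of $a_i,\ a_i+\omega-\omega^\star,\ a_i-|\boldsymbol{\ell}|-\omega^\star,\ a_i+|\boldsymbol{\ell}|+\omega$ lies in $\{-\ell_i,\dots,-1\}$; and with $S^\pm(\ell,a)=\{\pm(a+k+\tfrac12(\omega-\omega^\star)):k=1,\dots,\ell\}$, for all $i,j$ and signs, $S^{\epsilon_i}(\ell_i,a_i)$ and $S^{\epsilon_j}(\ell_j,a_j)$ are in general position (one contains the other or their union is not a string). *)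

(* Defs.v *)
From HB Require Import structures.
From mathcomp Require Import all_boot all_order all_algebra.
Set Implicit Arguments. Unset Strict Implicit. Unset Printing Implicit Defensive.
Import Order.TTheory GRing.Theory Num.Theory.
Local Open Scope ring_scope.

Section Defs.
Variable C : numClosedFieldType.
Variable N : nat.

(* N-tuples are functions 'I_N -> nat (nonnegative) or 'I_N -> int.
   Index p : 'I_N is 0-based: p stands for the paper's index p+1. *)

Definition totn (n : 'I_N -> nat) : nat := (\sum_(q < N) n q)%N.
Definition totz (n : 'I_N -> int) : int := \sum_(q < N) n q.
(* |n|_1^{p-1}  (paper index p = our p+1) *)
Definition preZ (n : 'I_N -> int) (p : 'I_N) : int := \sum_(q < N | (q < p)%N) n q.
Definition preIZ (n : 'I_N -> int) (p : 'I_N) : int := \sum_(q < N | (q <= p)%N) n q.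
Definition sufZ (n : 'I_N -> int) (p : 'I_N) : int := \sum_(q < N | (p < q)%N) n q.
Definition sufIZ (n : 'I_N -> int) (p : 'I_N) : int := \sum_(q < N | (p <= q)%N) n q.

Definition toZ (n : 'I_N -> nat) : 'I_N -> int := fun q => (n q)%:Z.

Definition poch (x : C) (k : nat) : C := \prod_(j < k) (x + j%:R).

Definition boxsum (b : 'I_N -> nat) (F : ('I_N -> nat) -> C) : C :=
  \sum_(n : {ffun 'I_N -> 'I_(\max_(q < N) b q).+1} | [forall p, (n p <= b p)%N])
     F (fun p => nat_of_ord (n p)).

(* vectors of the space V: coefficient functions on integer N-tuples
   (coordinates w.r.t. the basis V^n; only the box 0 <= n_p <= l_p is meaningful) *)
Definition vect := ('I_N -> int) -> C.

Definition inbox (ell : 'I_N -> nat) (k : 'I_N -> int) : bool :=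
  [forall p, (0 <= k p) && (k p <= (ell p)%:Z)].

(* basis vector V^k, with V^k = 0 if k lies outside the box *)
Definition Vb (ell : 'I_N -> nat) (k : 'I_N -> int) : vect :=
  fun m => if inbox ell k && [forall p, m p == k p] then 1 else 0.

Definition thetaS (thS0 hS omS : C) (k : nat) : C := thS0 + hS * k%:R * (k%:R + omS).

Definition xiS (ell : 'I_N -> nat) (hS omS : C) (a : 'I_N -> C)
    (n : 'I_N -> int) (p : 'I_N) : C :=
  hS * ((preZ n p + preIZ n p + sufZ (toZ ell) p)%:~R - a p + omS)
     * (n p - (ell p)%:Z)%:~R.

Definition subE (n : 'I_N -> int) (p : 'I_N) : 'I_N -> int :=
  fun q => n q - (q == p)%:Z.

Definition AstarB (ell : 'I_N -> nat) (thS0 hS omS : C) (a : 'I_N -> C)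
    (n : 'I_N -> nat) : vect :=
  fun m => thetaS thS0 hS omS (totn n) * Vb ell (toZ n) m
           + \sum_(p < N) xiS ell hS omS a (subE (toZ n) p) p * Vb ell (subE (toZ n) p) m.

Definition Astar (ell : 'I_N -> nat) (thS0 hS omS : C) (a : 'I_N -> C)
    (v : vect) : vect :=
  fun m => boxsum ell (fun n => v (toZ n) * AstarB ell thS0 hS omS a n m).

Definition Dcoef (ell : 'I_N -> nat) (omS : C) (a : 'I_N -> C)
    (n i : 'I_N -> nat) : C :=
  ((-1) ^ (totz (toZ n) - totz (toZ i))
   / poch ((totn i + totn n)%:R + omS) (totn i - totn n))
  * \prod_(p < N) ('C(ell p - n p, ell p - i p)%:R
       * poch ((preZ (toZ i) p + preIZ (toZ n) p + sufZ (toZ ell) p)%:~R - a p + omS)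
              (i p - n p)).

Definition Vi (ell : 'I_N -> nat) (omS : C) (a : 'I_N -> C) (i : 'I_N -> nat) : vect :=
  fun m => boxsum i (fun n => Dcoef ell omS a n i * Vb ell (toZ n) m).

Definition is_string (S : seq C) : Prop :=
  exists (x : C) (r : nat), forall z, z \in S <-> exists2 j : nat, (j <= r)%N & z = x + j%:R.

Definition general_position (S1 S2 : seq C) : Prop :=
  {subset S1 <= S2} \/ {subset S2 <= S1} \/ ~ is_string (S1 ++ S2).

(* S^{+}(l,a) for sgn = true, S^{-}(l,a) for sgn = false *)
Definition Sset (om omS : C) (sgn : bool) (l : nat) (a : C) : seq C :=
  [seq (if sgn then 1 else -1) * (a + k%:R + (om - omS) / 2%:R) | k <- iota 1 l].

End Defs.

(* Main.v *)
Require Import Defs.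
From HB Require Import structures.
From mathcomp Require Import all_boot all_order all_algebra.
From Stdlib Require Import FunctionalExtensionality.
From mathcomp Require Import zify ring.
Import Order.TTheory GRing.Theory Num.Theory.
Local Open Scope ring_scope.
Set Implicit Arguments. Unset Strict Implicit. Unset Printing Implicit Defensive.


Lemma boxsum_delta (C : numClosedFieldType) (N : nat) (b : 'I_N -> nat)
  (F : ('I_N -> nat) -> C) (n0 : 'I_N -> nat) :
  (forall n, (forall p, (n p <= b p)%N) -> n <> n0 -> F n = 0) ->
  boxsum b F = if [forall p, (n0 p <= b p)%N] then F n0 else 0.
Proof.
move=> HF; rewrite /boxsum.
have lem p : (b p <= \max_(q < N) b q)%N by exact: (leq_bigmax p).
move: (\max_(q < N) b q) lem => M lem.
case: ifP => H0.
- have le p : (n0 p < M.+1)%N.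
    by rewrite ltnS (leq_trans (forallP H0 p)).
  pose f0 : {ffun 'I_N -> 'I_M.+1} := [ffun p => Ordinal (le p)].
  rewrite (bigD1 f0) /=; last by apply/forallP => p; rewrite ffunE; exact: (forallP H0 p).
  rewrite big1 ?addr0.
    by congr F; apply: functional_extensionality => p; rewrite ffunE.
  move=> f /andP[Hf Hne]; apply: HF; first by move=> p; exact: (forallP Hf p).
  move=> E; move/negP: Hne; apply; apply/eqP/ffunP => p; apply/val_inj.
  by rewrite ffunE /= -E.
- apply: big1 => f Hf; apply: HF; first by move=> p; exact: (forallP Hf p).
  move=> E; move/negbT/negP: H0; apply; apply/forallP => p; rewrite -E; exact: (forallP Hf p).
Qed.


Definition addE (N : nat) (m : 'I_N -> nat) (p : 'I_N) : 'I_N -> nat :=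
  fun q => (m q + (q == p))%N.

Lemma boxsum_eq (C : numClosedFieldType) (N : nat) (b : 'I_N -> nat) (F G : ('I_N -> nat) -> C) :
  (forall n, (forall p, (n p <= b p)%N) -> F n = G n) -> boxsum b F = boxsum b G.
Proof. by move=> H; apply: eq_bigr => f Hf; apply: H => p; exact: (forallP Hf p). Qed.

Lemma boxsumD (C : numClosedFieldType) (N : nat) (b : 'I_N -> nat) (F G : ('I_N -> nat) -> C) :
  boxsum b (fun n => F n + G n) = boxsum b F + boxsum b G.
Proof. by rewrite /boxsum big_split. Qed.

Lemma boxsum_sum (C : numClosedFieldType) (N : nat) (b : 'I_N -> nat) (F : ('I_N -> nat) -> 'I_N -> C) :
  boxsum b (fun n => \sum_(p < N) F n p) = \sum_(p < N) boxsum b (fun n => F n p).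
Proof. by rewrite /boxsum exchange_big. Qed.

Lemma inbox_toZ (N : nat) (ell n : 'I_N -> nat) :
  [forall p, (n p <= ell p)%N] -> inbox ell (toZ n).
Proof. by move=> H; apply/forallP => p; rewrite /toZ lez_nat (forallP H p). Qed.

Lemma Vb_toZ (C : numClosedFieldType) (N : nat) (ell n : 'I_N -> nat) m :
  [forall p, (n p <= ell p)%N] ->
  Vb C ell (toZ n) m = if [forall p, m p == toZ n p] then 1 else 0.
Proof. by move=> H; rewrite /Vb inbox_toZ. Qed.

Lemma Vb_ne (C : numClosedFieldType) (N : nat) (ell n : 'I_N -> nat) m :
  n <> (fun p => `|m p|%N) -> Vb C ell (toZ n) m = 0.
Proof.
move=> ne; rewrite /Vb; case: ifP => // /andP[_ /forallP H]; exfalso; apply: ne.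
by apply: functional_extensionality => p; move/eqP: (H p) => ->.
Qed.

Lemma Vb_sub_ne (C : numClosedFieldType) (N : nat) (ell n : 'I_N -> nat) m p :
  n <> addE (fun p => `|m p|%N) p -> Vb C ell (subE (toZ n) p) m = 0.
Proof.
move=> ne; rewrite /Vb; case: ifP => // /andP[/forallP Hb /forallP H]; exfalso; apply: ne.
apply: functional_extensionality => q; rewrite /addE; move/eqP: (H q) => ->.
move/andP: (Hb q) => [H0 _].
rewrite /subE /toZ in H0 *.
case: (q == p) H0 => /= H0.
  move: H0; case: (n q) => [|k] //= _; lia.
by rewrite !addn0.
Qed.

Lemma subE_addE (N : nat) (m : 'I_N -> nat) p : subE (toZ (addE m p)) p = toZ m.
Proof.
apply: functional_extensionality => q; rewrite /subE /toZ /addE.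
by rewrite PoszD addrK.
Qed.

Lemma Vi_toZ (C : numClosedFieldType) (N : nat) (ell i : 'I_N -> nat) (omS : C) (a : 'I_N -> C) n :
  (forall p, (i p <= ell p)%N) -> [forall p, (n p <= ell p)%N] ->
  Vi ell omS a i (toZ n) = if [forall p, (n p <= i p)%N] then Dcoef ell omS a n i else 0.
Proof.
move=> Hi Hn; rewrite /Vi (@boxsum_delta _ _ _ _ n).
  case: ifP => // H; rewrite Vb_toZ //.
  have -> : [forall p, toZ n p == toZ n p] by apply/forallP.
  by rewrite mulr1.
move=> n' Hn' ne; rewrite Vb_ne ?mulr0 //.
Qed.


Lemma big_split_last (R : Type) (idx : R) (op : Monoid.com_law idx) (N n : nat)
  (Hn : (n < N)%N) (P : pred 'I_N) (F : 'I_N -> R) :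
  P (Ordinal Hn) ->
  \big[op/idx]_(q | P q && (q < n.+1)%N) F q
  = op (\big[op/idx]_(q | P q && (q < n)%N) F q) (F (Ordinal Hn)).
Proof.
move=> HP; rewrite (bigD1 (Ordinal Hn)) /=; last by rewrite HP ltnSn.
rewrite Monoid.mulmC; apply: congr2 => //; apply: eq_bigl => q.
case: (P q) => //=.
have -> : (q != Ordinal Hn) = (nat_of_ord q != n) by [].
by rewrite ltnS (ltn_neqAle q n) andbC.
Qed.

Lemma tele_gen (R : comPzRingType) (N : nat) (dd z xt yt : 'I_N -> R) :
  (forall q : 'I_N, (\sum_(r < N | (r < q)%N) dd r) * yt q + dd q * z q
       = (\sum_(r < N | (r < q)%N) dd r + dd q) * xt q) ->
  forall n, (n <= N)%N ->
  \sum_(p < N | true && (p < n)%N) dd p * z p * (\prod_(q < N | (q < p)%N) xt q)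
        * (\prod_(q < N | (p < q)%N && (q < n)%N) yt q)
  = (\sum_(p < N | true && (p < n)%N) dd p) * \prod_(q < N | true && (q < n)%N) xt q.
Proof.
move=> H; elim=> [|n IH] Hn.
  by rewrite !big_pred0 ?mul0r // => q; rewrite ltn0 andbF.
rewrite (@big_split_last _ _ _ _ _ Hn (fun _ => true)) // (@big_split_last _ _ _ _ _ Hn (fun _ => true)) // (@big_split_last _ _ _ _ _ Hn (fun _ => true)) //.
have -> : \prod_(q < N | (Ordinal Hn < q)%N && (q < n.+1)%N) yt q = 1.
  by rewrite big_pred0 // => q /=; rewrite ltnS; case: leqP => //= /leq_trans h; apply/negbTE; rewrite -ltnNge.
rewrite mulr1.
transitivity ((\sum_(p < N | true && (p < n)%N) dd p * z p * (\prod_(q < N | (q < p)%N) xt q)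
        * (\prod_(q < N | (p < q)%N && (q < n)%N) yt q)) * yt (Ordinal Hn)
   + dd (Ordinal Hn) * z (Ordinal Hn) * \prod_(q < N | (q < Ordinal Hn)%N) xt q).
  congr (_ + _); rewrite mulr_suml; apply: eq_bigr => p /= Hp.
  by rewrite (@big_split_last _ _ _ _ _ Hn (fun q => (p < q)%N)) //= mulrA.
rewrite IH ?(ltnW Hn) //.
have -> : \prod_(q < N | (q < Ordinal Hn)%N) xt q = \prod_(q < N | true && (q < n)%N) xt q by [].
have E : (\sum_(p < N | true && (p < n)%N) dd p) * yt (Ordinal Hn) + dd (Ordinal Hn) * z (Ordinal Hn)
  = (\sum_(p < N | true && (p < n)%N) dd p + dd (Ordinal Hn)) * xt (Ordinal Hn) := H (Ordinal Hn).
transitivity ((\prod_(q < N | true && (q < n)%N) xt q) *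
  ((\sum_(p < N | true && (p < n)%N) dd p) * yt (Ordinal Hn) + dd (Ordinal Hn) * z (Ordinal Hn))).
  ring.
transitivity ((\sum_(p < N | true && (p < n)%N) dd p + dd (Ordinal Hn)) *
   (\prod_(q < N | true && (q < n)%N) xt q * xt (Ordinal Hn))); last by [].
rewrite E; ring.
Qed.

Lemma tele (R : comPzRingType) (N : nat) (dd z xt yt : 'I_N -> R) :
  (forall q : 'I_N, (\sum_(r < N | (r < q)%N) dd r) * yt q + dd q * z q
       = (\sum_(r < N | (r < q)%N) dd r + dd q) * xt q) ->
  \sum_p dd p * z p * (\prod_(q < N | (q < p)%N) xt q) * (\prod_(q < N | (p < q)%N) yt q)
  = (\sum_p dd p) * \prod_q xt q.
Proof.
move=> H; have := tele_gen H (leqnn N).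
have E1 (F : 'I_N -> R) : \sum_(p < N | true && (p < N)%N) F p = \sum_p F p.
  by apply: eq_bigl => p; rewrite ltn_ord.
have E2 (F : 'I_N -> R) : \prod_(p < N | true && (p < N)%N) F p = \prod_p F p.
  by apply: eq_bigl => p; rewrite ltn_ord.
rewrite !E1 E2 => <-; apply: eq_bigr => p _; congr (_ * _).
by apply: eq_bigl => q; rewrite ltn_ord andbT.
Qed.

Lemma poch_S (C : numClosedFieldType) (x : C) n : poch x n.+1 = x * poch (x + 1) n.
Proof.
rewrite /poch big_ord_recl addr0; congr (_ * _); apply: eq_bigr => j _.
by rewrite lift0 mulrSr; ring.
Qed.

Lemma poch_Sr (C : numClosedFieldType) (x : C) n : poch x n.+1 = poch x n * (x + n%:R).
Proof. by rewrite /poch big_ord_recr. Qed.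


Lemma sumZ (I : finType) (P : pred I) (f : I -> nat) :
  (\sum_(r | P r) f r)%N%:Z = \sum_(r | P r) (f r)%:Z.
Proof. exact: (big_morph _ PoszD (erefl _)). Qed.

Lemma totz_toZ (N : nat) (n : 'I_N -> nat) : totz (toZ n) = (totn n)%:Z.
Proof. by rewrite /totz /totn sumZ. Qed.

Lemma preIZ_addE (N : nat) (m : 'I_N -> nat) p q :
  preIZ (toZ (addE m p)) q = preIZ (toZ m) q + ((p <= q)%N : nat)%:Z.
Proof.
rewrite /preIZ /toZ /addE.
under eq_bigr do rewrite PoszD.
rewrite big_split /=; congr (_ + _).
rewrite big_mkcond (bigD1 p) //= eqxx big1 ?addr0; first by case: (p <= q)%N.
by move=> r /negbTE ->; case: ifP.
Qed.

Lemma preZ_diff (N : nat) (i m : 'I_N -> nat) (Hm : forall p, (m p <= i p)%N) q :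
  preZ (toZ i) q = preZ (toZ m) q + (\sum_(r < N | (r < q)%N) (i r - m r))%N%:Z.
Proof.
rewrite /preZ /toZ sumZ -big_split; apply: eq_bigr => r _.
by rewrite /= -PoszD subnKC.
Qed.

Definition Xf (C : numClosedFieldType) (N : nat) (ell : 'I_N -> nat) (omS : C) (a : 'I_N -> C)
  (i m : 'I_N -> nat) (q : 'I_N) : C :=
  (preZ (toZ i) q + preIZ (toZ m) q + sufZ (toZ ell) q)%:~R - a q + omS.

Lemma Xf_addE (C : numClosedFieldType) (N : nat) (ell : 'I_N -> nat) (omS : C) (a : 'I_N -> C)
  (i m : 'I_N -> nat) p q :
  Xf ell omS a i (addE m p) q = Xf ell omS a i m q + ((p <= q)%N : nat)%:R.
Proof. rewrite /Xf preIZ_addE !intrD -pmulrn; ring. Qed.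

Lemma Xf_z (C : numClosedFieldType) (N : nat) (ell : 'I_N -> nat) (omS : C) (a : 'I_N -> C)
  (i m : 'I_N -> nat) (Hm : forall p, (m p <= i p)%N) q :
  Xf ell omS a i m q = (preZ (toZ m) q + preIZ (toZ m) q + sufZ (toZ ell) q)%:~R - a q + omS
     + (\sum_(r < N | (r < q)%N) (i r - m r))%N%:R.
Proof. rewrite /Xf (preZ_diff Hm) !intrD -pmulrn; ring. Qed.

Definition Ef (C : numClosedFieldType) (N : nat) (ell : 'I_N -> nat) (omS : C) (a : 'I_N -> C)
  (i m : 'I_N -> nat) (q : 'I_N) : C :=
  if (i q - m q)%N is e.+1 then poch (Xf ell omS a i m q + 1) e else 1.
Definition xt (C : numClosedFieldType) (N : nat) (ell : 'I_N -> nat) (omS : C) (a : 'I_N -> C)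
  (i m : 'I_N -> nat) (q : 'I_N) : C :=
  if (i q - m q)%N is e.+1 then Xf ell omS a i m q else 1.
Definition yt (C : numClosedFieldType) (N : nat) (ell : 'I_N -> nat) (omS : C) (a : 'I_N -> C)
  (i m : 'I_N -> nat) (q : 'I_N) : C :=
  if (i q - m q)%N is e.+1 then Xf ell omS a i m q + (e.+1)%:R else 1.

Lemma F1 (C : numClosedFieldType) (N : nat) (ell : 'I_N -> nat) (omS : C) (a : 'I_N -> C)
  (i m : 'I_N -> nat) q :
  poch (Xf ell omS a i m q) (i q - m q) = xt ell omS a i m q * Ef ell omS a i m q.
Proof.
rewrite /xt /Ef; case: (i q - m q)%N => [|e]; first by rewrite /poch big_ord0 mulr1.
by rewrite poch_S.
Qed.

Lemma F2 (C : numClosedFieldType) (N : nat) (ell : 'I_N -> nat) (omS : C) (a : 'I_N -> C)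
  (i m : 'I_N -> nat) q :
  poch (Xf ell omS a i m q + 1) (i q - m q) = yt ell omS a i m q * Ef ell omS a i m q.
Proof.
rewrite /yt /Ef; case: (i q - m q)%N => [|e]; first by rewrite /poch big_ord0 mulr1.
by rewrite poch_Sr mulrC mulrSr; congr (_ * _); ring.
Qed.


Lemma Pp (C : numClosedFieldType) (N : nat) (ell : 'I_N -> nat) (omS : C) (a : 'I_N -> C)
  (i m : 'I_N -> nat) (Hi : forall p, (i p <= ell p)%N) (Hm : forall p, (m p <= i p)%N)
  p (hp : (m p < i p)%N) :
  (ell p - m p)%:R * \prod_q ('C(ell q - addE m p q, ell q - i q)%:R
                               * poch (Xf ell omS a i (addE m p) q) (i q - addE m p q))
  = (i p - m p)%:R * (\prod_q ('C(ell q - m q, ell q - i q)%:R * Ef ell omS a i m q))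
     * (\prod_(q < N | (q < p)%N) xt ell omS a i m q) * (\prod_(q < N | (p < q)%N) yt ell omS a i m q).
Proof.
rewrite (bigD1 p) //= [X in _ = _ * X * _ * _](bigD1 p) //=.
have Hb : ((ell p - m p)%:R * 'C(ell p - addE m p p, ell p - i p)%:R
          = (i p - m p)%:R * 'C(ell p - m p, ell p - i p)%:R :> C).
  rewrite -!natrM; congr (_%:R).
  have := mul_bin_down (ell p - m p) (ell p - i p).
  have -> : (ell p - m p).-1 = (ell p - addE m p p)%N by rewrite /addE eqxx; have := Hi p; lia.
  have -> : (ell p - m p - (ell p - i p))%N = (i p - m p)%N by have := Hi p; have := Hm p; lia.
  by [].
have Ep : poch (Xf ell omS a i (addE m p) p) (i p - addE m p p) = Ef ell omS a i m p.
  rewrite Xf_addE leqnn /Ef /addE eqxx.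
  have [e He] : exists e, (i p - m p)%N = e.+1 by exists (i p - m p).-1; lia.
  rewrite He; have -> : (i p - (m p + true))%N = e by lia.
  by [].
rewrite Ep.
have Eq : \prod_(q < N | q != p) ('C(ell q - addE m p q, ell q - i q)%:R
                               * poch (Xf ell omS a i (addE m p) q) (i q - addE m p q))
   = \prod_(q < N | q != p) ('C(ell q - m q, ell q - i q)%:R * Ef ell omS a i m q)
     * \prod_(q < N | q != p) (if (q < p)%N then xt ell omS a i m q else yt ell omS a i m q).
  rewrite -big_split; apply: eq_bigr => q /negbTE qp /=.
  rewrite /addE qp addn0 Xf_addE.
  case: ltnP => hq.
    by rewrite addr0 F1; ring.
  by rewrite mulr1n F2; ring.
rewrite Eq.
have Eg : \prod_(q < N | q != p) (if (q < p)%N then xt ell omS a i m q else yt ell omS a i m q)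
   = (\prod_(q < N | (q < p)%N) xt ell omS a i m q) * (\prod_(q < N | (p < q)%N) yt ell omS a i m q).
  rewrite (bigID (fun q : 'I_N => (q < p)%N)) /=; congr (_ * _).
    apply: eq_big => q.
      have -> : (q != p) = (nat_of_ord q != nat_of_ord p) by [].
      by case: ltngtP.
    by move=> /andP[_ ->].
  apply: eq_big => q.
    have -> : (q != p) = (nat_of_ord q != nat_of_ord p) by [].
    by case: ltngtP.
  by move=> /andP[_ /negbTE ->].
rewrite Eg.
transitivity (((ell p - m p)%:R * 'C(ell p - addE m p p, ell p - i p)%:R) * Ef ell omS a i m p *
  (\prod_(q < N | q != p) ('C(ell q - m q, ell q - i q)%:R * Ef ell omS a i m q) *
  ((\prod_(q < N | (q < p)%N) xt ell omS a i m q) * (\prod_(q < N | (p < q)%N) yt ell omS a i m q)))).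
  ring.
rewrite Hb; ring.
Qed.


Lemma sgn_neg (C : numClosedFieldType) (n : nat) : (-1 : C) ^ (- (n%:Z)) = (-1) ^+ n.
Proof. by rewrite -exprnN -exprVn invrN1. Qed.

Lemma totn_addE (N : nat) (m : 'I_N -> nat) p : totn (addE m p) = (totn m + 1)%N.
Proof.
rewrite /totn /addE big_split /=; congr addn.
by rewrite (bigD1 p) //= eqxx big1 // => q /negbTE ->.
Qed.

Lemma addE_le (N : nat) (i m : 'I_N -> nat) (Hm : forall p, (m p <= i p)%N) p :
  [forall q, (addE m p q <= i q)%N] = (m p < i p)%N.
Proof.
apply/forallP/idP => [H | H q].
  by have := H p; rewrite /addE eqxx addn1.
rewrite /addE; case: eqP => [->|_]; first by rewrite addn1.
by rewrite addn0.
Qed.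

Lemma ident (C : numClosedFieldType) (N : nat) (ell : 'I_N -> nat) (omS : C) (a : 'I_N -> C)
  (i m : 'I_N -> nat) (Hi : forall p, (i p <= ell p)%N) (Hm : forall p, (m p <= i p)%N) :
  \sum_p (if (m p < i p)%N then
      ((preZ (toZ m) p + preIZ (toZ m) p + sufZ (toZ ell) p)%:~R - a p + omS) * (ell p - m p)%:R *
      \prod_q ('C(ell q - addE m p q, ell q - i q)%:R
                               * poch (Xf ell omS a i (addE m p) q) (i q - addE m p q))
     else 0)
  = (\sum_q (i q - m q))%N%:R * \prod_q ('C(ell q - m q, ell q - i q)%:R * poch (Xf ell omS a i m q) (i q - m q)).
Proof.
set z := fun p => ((preZ (toZ m) p + preIZ (toZ m) p + sufZ (toZ ell) p)%:~R - a p + omS : C).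
set W := \prod_q ('C(ell q - m q, ell q - i q)%:R * Ef ell omS a i m q).
have HP : \prod_q ('C(ell q - m q, ell q - i q)%:R * poch (Xf ell omS a i m q) (i q - m q))
     = W * \prod_q xt ell omS a i m q.
  rewrite /W -big_split; apply: eq_bigr => q _ /=; rewrite F1; ring.
rewrite HP.
transitivity (W * \sum_p (i p - m p)%:R * z p * (\prod_(q < N | (q < p)%N) xt ell omS a i m q)
        * (\prod_(q < N | (p < q)%N) yt ell omS a i m q)).
  rewrite mulr_sumr; apply: eq_bigr => p _.
  case: ifP => hp.
    rewrite -mulrA (Pp omS a Hi Hm hp) -/W /z; ring.
  have -> : (i p - m p)%N = 0%N by have := Hm p; move/negbT: hp; lia.
  by rewrite !mul0r mulr0.
rewrite (tele (dd := fun p => (i p - m p)%:R)).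
  by rewrite natr_sum; ring.
move=> q; rewrite -natr_sum /z /xt /yt.
have := Xf_z ell omS a Hm q.
case: (i q - m q)%N => [|e] E; first ring.
rewrite E; ring.
Qed.


Lemma core (C : numClosedFieldType) (N : nat) (ell : 'I_N -> nat)
  (thS0 hS omS : C) (a : 'I_N -> C)
  (HomS : forall k : nat, (1 <= k <= (2 * totn ell).-1)%N -> omS != - k%:R)
  (i m : 'I_N -> nat) (Hi : forall p, (i p <= ell p)%N) (Hm : forall p, (m p <= i p)%N) :
  thetaS thS0 hS omS (totn m) * Dcoef ell omS a m i
  + \sum_(p < N) (if [forall q, (addE m p q <= i q)%N]
                  then xiS ell hS omS a (toZ m) p * Dcoef ell omS a (addE m p) i else 0)
  = thetaS thS0 hS omS (totn i) * Dcoef ell omS a m i.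
Proof.
have Hd : totn i = (totn m + \sum_q (i q - m q))%N.
  by rewrite /totn -big_split; apply: eq_bigr => q _; rewrite /= subnKC.
have HIl : (totn i <= totn ell)%N by apply: leq_sum => q _.
under eq_bigr => p _ do rewrite (addE_le Hm).
move: Hd; case Ed: (\sum_q (i q - m q))%N => [|d] Hd.
  rewrite big1 ?addr0; first by rewrite Hd addn0.
  move=> p _; case: ifP => // hp; exfalso.
  move: Ed => /eqP; rewrite sum_nat_eq0 => /forallP /(_ p) /implyP /(_ isT) /eqP; move: hp; lia.
set k := totn m.
set x0 : C := (totn i + k)%:R + omS.
set Q := poch (x0 + 1) d.
set s := (-1 : C) ^+ d.
set P := \prod_q ('C(ell q - m q, ell q - i q)%:R * poch (Xf ell omS a i m q) (i q - m q)).
have x0N : x0 != 0.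
  rewrite /x0 addrC addr_eq0; apply: HomS; rewrite Hd; apply/andP; split; first lia.
  move: HIl; rewrite Hd; lia.
have DmE : Dcoef ell omS a m i = - s / (x0 * Q) * P.
  rewrite /Dcoef; congr (_ * _).
  rewrite !totz_toZ Hd PoszD opprD addrA subrr add0r sgn_neg exprS mulN1r.
  rewrite -/k -Hd /x0 /Q; congr (_ / _).
  have -> : (totn i - k)%N = d.+1 by rewrite Hd; lia.
  by rewrite poch_S.
have DpE p : Dcoef ell omS a (addE m p) i = s / Q * \prod_q ('C(ell q - addE m p q, ell q - i q)%:R
                               * poch (Xf ell omS a i (addE m p) q) (i q - addE m p q)).
  rewrite /Dcoef; congr (_ * _).
  rewrite !totz_toZ totn_addE Hd -/k.
  have -> : ((k + 1)%N%:Z - (k + d.+1)%N%:Z) = - (d%:Z) by rewrite !PoszD; ring.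
  rewrite sgn_neg /Q /x0 -Hd; congr (_ / _).
  have -> : (totn i - (k + 1))%N = d by rewrite Hd; lia.
  by rewrite addnA natrD; congr poch; ring.
rewrite DmE.
transitivity (thetaS thS0 hS omS k * (- s / (x0 * Q) * P) + (- hS * s / Q) *
  \sum_p (if (m p < i p)%N then
      ((preZ (toZ m) p + preIZ (toZ m) p + sufZ (toZ ell) p)%:~R - a p + omS) * (ell p - m p)%:R *
      \prod_q ('C(ell q - addE m p q, ell q - i q)%:R
                               * poch (Xf ell omS a i (addE m p) q) (i q - addE m p q))
     else 0)).
  congr (_ + _); rewrite mulr_sumr; apply: eq_bigr => p _.
  case: ifP => hp; last by rewrite mulr0.
  rewrite DpE /xiS /toZ intrB -!pmulrn natrB; last exact: leq_trans (Hm p) (Hi p).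
  ring.
rewrite (ident omS a Hi Hm) Ed -/P.
have Ht : thetaS thS0 hS omS (totn i) = thetaS thS0 hS omS k + hS * d.+1%:R * x0.
  by rewrite /thetaS /x0 Hd !natrD; ring.
rewrite Ht [RHS]mulrDl; congr (_ + _).
transitivity (- hS * s / Q * d.+1%:R * P * (x0 * x0^-1)); last first.
  by rewrite invfM; ring.
by rewrite mulfV // mulr1; ring.
Qed.

Unset Implicit Arguments.


Theorem mainTheorem4 (C : numClosedFieldType) (N : nat) (ell : 'I_N -> nat)
  (th0 thS0 h hS om omS : C) (a : 'I_N -> C)
  (hN0 : h != 0) (hSN0 : hS != 0)
  (Hom : forall k : nat, (1 <= k <= (2 * totn ell).-1)%N -> om != - k%:R)
  (HomS : forall k : nat, (1 <= k <= (2 * totn ell).-1)%N -> omS != - k%:R)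
  (Ha : forall (p : 'I_N) (k : nat), (1 <= k <= ell p)%N ->
     [/\ a p != - k%:R,
         a p + om - omS != - k%:R,
         a p - (totn ell)%:R - omS != - k%:R &
         a p + (totn ell)%:R + om != - k%:R])
  (Hgp : forall (p q : 'I_N) (sp sq : bool),
     general_position (Sset om omS sp (ell p) (a p)) (Sset om omS sq (ell q) (a q)))
  (i : 'I_N -> nat) (Hi : forall p, (i p <= ell p)%N) :
  forall m : 'I_N -> int,
    Astar ell thS0 hS omS a (Vi ell omS a i) m
    = thetaS thS0 hS omS (totn i) * Vi ell omS a i m.
Proof.
move=> m.
pose m' := fun p => `|m p|%N.
have leT (n : 'I_N -> nat) : [forall p, (n p <= i p)%N] -> [forall p, (n p <= ell p)%N].
  by move=> /forallP H; apply/forallP => p; exact: leq_trans (H p) (Hi p).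
have -> : Vi ell omS a i m = if [forall p, (m' p <= i p)%N] then
     Dcoef ell omS a m' i * (if [forall p, m p == toZ m' p] then 1 else 0) else 0.
  rewrite /Vi (@boxsum_delta _ _ _ _ m').
    by case: ifP => // H; rewrite Vb_toZ // leT.
  by move=> n Hn ne; rewrite Vb_ne ?mulr0.
rewrite /Astar.
rewrite (@boxsum_eq _ _ _ _ (fun n =>
   Vi ell omS a i (toZ n) * thetaS thS0 hS omS (totn n) * Vb C ell (toZ n) m
   + \sum_(p < N) Vi ell omS a i (toZ n) * (xiS ell hS omS a (subE (toZ n) p) p
        * Vb C ell (subE (toZ n) p) m))); last first.
  by move=> n Hn; rewrite /AstarB mulrDr mulr_sumr mulrA.
rewrite boxsumD boxsum_sum.
rewrite (@boxsum_delta _ _ _ _ m'); last by move=> n Hn ne; rewrite Vb_ne ?mulr0.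
under eq_bigr => p _ do
  (rewrite (@boxsum_delta _ _ _ _ (addE m' p)); last by move=> n Hn ne; rewrite Vb_sub_ne ?mulr0).
under eq_bigr => p _ do rewrite subE_addE.
have addle p : [forall q, (addE m' p q <= i q)%N] -> [forall q, (m' q <= i q)%N].
  move=> /forallP H; apply/forallP => q; apply: leq_trans (H q); exact: leq_addr.
case Hle: [forall p, (m' p <= i p)%N]; last first.
  rewrite mulr0 big1 ?addr0.
    case: ifP => // H; rewrite Vi_toZ // Hle; by rewrite !mul0r.
  move=> p _; case: ifP => // H; rewrite Vi_toZ //.
  case: ifP => H2; last by rewrite mul0r.
  by move: (addle p H2); rewrite Hle.
have Hle' := leT _ Hle.
rewrite Hle' Vi_toZ // Hle Vb_toZ //.
case Hg: [forall p, m p == toZ m' p]; last first.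
  rewrite !mulr0 add0r big1 // => p _; case: ifP => //; by rewrite !mulr0.
rewrite !mulr1 mulrC -(core thS0 hS a HomS Hi (fun p => (forallP Hle p))); congr (_ + _).
apply: eq_bigr => p _.
case: ifP => H1; case: ifP => H2 //.
- by rewrite Vi_toZ // H2 mulr1 mulrC.
- by rewrite Vi_toZ // H2 mul0r.
- by move: (leT _ H2); rewrite H1.
Qed.
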